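(* Let $(Q,P)$ be a weakly quasi-lattice ordered group and let $\Lambda$ be a $P$-graph with $\mathrm{FA}(\Lambda)\neq\emptyset$. For any $g\in\mathcal{X}(\Lambda)\times Q\times\mathcal{X}(\Lambda)$, the following are equivalent: (1) $g\in\mathcal{G}(\Lambda)$; (2) $g=(\mu\cdot x,\ d(\mu)d(\nu)^{-1},\ \nu\cdot x)$ for some $x\in\mathcal{X}(\Lambda)$ and $\mu,\nu\in\Lambda$ with $s(\mu)=s(\nu)=r(x)$.
   Context: $(Q,P)$ weakly quasi-lattice ordered: $Q$ a discrete group, $P\subseteq Q$ a subsemigroup containing the identity $e$ with $P\cap P^{-1}=\{e\}$, and, with $p\le r$ meaning $pq=r$ for some $q\in P$, any two elements of $P$ with a common upper bound have a least common upper bound. A $P$-graph is a countable small category $\Lambda$ (identities $\Lambda^{(0)}$, range/source $r,s$) with a functor $d:\Lambda\to P$ with unique factorisation (if $d(\lambda)=pq$ there are unique $\mu,\nu$ with $\lambda=\mu\nu$, $d(\mu)=p$, $d(\nu)=q$). Write $\Lambda^m=d^{-1}(m)$, $\lambda\Lambda=\{\lambda\mu: s(\lambda)=r(\mu)\}$, $\mu\preceq\lambda$ iff $\lambda\in\mu\Lambda$. $\mathrm{FA}(\Lambda)$ is the set of $\lambda$ such that for all $\mu\in\lambda\Lambda,\nu\in\Lambda$ there is finite $J\subseteq\Lambda$ with $\mu\Lambda\cap\nu\Lambda=\bigcup_{\kappa\in J}\kappa\Lambda$. A filter is a nonempty hereditary and directed subset of $\Lambda$ (w.r.t. $\preceq$);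 each filter $x$ contains a unique element $r(x)\in\Lambda^{(0)}$, and $d|_x$ is injective. For a filter $x$ with $r(x)=s(\mu)$, $\mu\cdot x=\{\zeta\in\Lambda: \zeta\preceq\mu\gamma\text{ for some }\gamma\in x\}$ (a filter). Path space $\mathcal{X}(\Lambda)=\{x\text{ filter}: x\cap\mathrm{FA}(\Lambda)\neq\emptyset\}$. For $x\in\mathcal{X}(\Lambda)$, $m\in P$ with $x\cap\Lambda^m\neq\emptyset$ (write $x\in\mathrm{dom}(m)$), $x(0,m)$ is the unique element of $x\cap\Lambda^m$ and $x\cdot m=\{\mu: x(0,m)\mu\in x\}$. The path groupoid $\mathcal{G}(\Lambda)$ is the set of $(x,q,y)\in\mathcal{X}(\Lambda)\times Q\times\mathcal{X}(\Lambda)$ for which there are $m,n\in P$ with $q=mn^{-1}$, $x\in\mathrm{dom}(m)$, $y\in\mathrm{dom}(n)$, $x\cdot m=y\cdot n$. *)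

(* Defs.v *)
From Stdlib Require Import List.
Set Implicit Arguments.

Record WQLO := {
  Q : Type;
  qmul : Q -> Q -> Q;
  qe : Q;
  qinv : Q -> Q;
  qmul_assoc : forall a b c, qmul a (qmul b c) = qmul (qmul a b) c;
  qmul_e_l : forall a, qmul qe a = a;
  qmul_e_r : forall a, qmul a qe = a;
  qmul_inv_l : forall a, qmul (qinv a) a = qe;
  qmul_inv_r : forall a, qmul a (qinv a) = qe;
  inP : Q -> Prop;
  inP_e : inP qe;
  inP_mul : forall a b, inP a -> inP b -> inP (qmul a b);
  inP_cap_inv : forall a, inP a -> inP (qinv a) -> a = qe;
  wqlo : forall p q, inP p -> inP q ->
    (exists r, inP r /\ (exists a, inP a /\ qmul p a = r)
               /\ (exists b, inP b /\ qmul q b = r)) ->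
    exists l, inP l /\ (exists a, inP a /\ qmul p a = l)
              /\ (exists b, inP b /\ qmul q b = l)
              /\ forall r, inP r ->
                   (exists a, inP a /\ qmul p a = r) ->
                   (exists b, inP b /\ qmul q b = r) ->
                   exists c, inP c /\ qmul l c = r
}.

Definition pleq (G : WQLO) (p r : Q G) : Prop :=
  exists a, inP G a /\ qmul G p a = r.

(** Vertices are the objects [Obj]; the
    identity morphisms [pid v] form Λ^(0).  Composition [comp a b] = ab is
    meaningful when s a = r b. *)
Record PGraph (G : WQLO) := {
  Obj : Type;
  Mor : Type;
  rg : Mor -> Obj;
  sc : Mor -> Obj;
  pid : Obj -> Mor;
  comp : Mor -> Mor -> Mor;
  mor_countable : exists f : Mor -> nat, forall a b, f a = f b -> a = b;
  rg_id : forall v, rg (pid v) = v;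
  sc_id : forall v, sc (pid v) = v;
  rg_comp : forall a b, sc a = rg b -> rg (comp a b) = rg a;
  sc_comp : forall a b, sc a = rg b -> sc (comp a b) = sc b;
  comp_id_l : forall a, comp (pid (rg a)) a = a;
  comp_id_r : forall a, comp a (pid (sc a)) = a;
  comp_assoc : forall a b c, sc a = rg b -> sc b = rg c ->
      comp a (comp b c) = comp (comp a b) c;
  deg : Mor -> Q G;
  deg_P : forall a, inP G (deg a);
  deg_id : forall v, deg (pid v) = qe G;
  deg_comp : forall a b, sc a = rg b -> deg (comp a b) = qmul G (deg a) (deg b);
  unique_fact : forall lam p q, inP G p -> inP G q -> deg lam = qmul G p q ->
      exists mu nu, (sc mu = rg nu /\ lam = comp mu nu /\ deg mu = p /\ deg nu = q)
        /\ forall mu' nu', sc mu' = rg nu' -> lam = comp mu' nu' ->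
             deg mu' = p -> deg nu' = q -> mu' = mu /\ nu' = nu
}.

Unset Implicit Arguments.
Section PG.
Context {G : WQLO}.
Variable L : PGraph G.

Notation Mor := (Mor L).
Notation comp := (comp L).

Definition in_ext (mu lam : Mor) : Prop :=
  exists a, sc L mu = rg L a /\ lam = comp mu a.

Definition preceq (mu lam : Mor) : Prop := in_ext mu lam.

Definition FA (lam : Mor) : Prop :=
  forall mu nu, in_ext lam mu ->
    exists J : list Mor, forall k,
      (in_ext mu k /\ in_ext nu k) <-> (exists k', In k' J /\ in_ext k' k).

Definition mset := Mor -> Prop.

Definition is_filter (x : mset) : Prop :=
  (exists lam, x lam) /\
  (forall lam mu, x lam -> preceq mu lam -> x mu) /\
  (forall lam mu, x lam -> x mu ->
     exists nu, x nu /\ preceq lam nu /\ preceq mu nu).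

Definition act (mu : Mor) (x : mset) : mset :=
  fun z => exists g, x g /\ sc L mu = rg L g /\ preceq z (comp mu g).

Definition path_space (x : mset) : Prop :=
  is_filter x /\ exists lam, x lam /\ FA lam.

Definition in_dom (x : mset) (m : Q G) : Prop :=
  exists lam, x lam /\ deg L lam = m.

(** x·m = {μ : x(0,m) μ ∈ x} ; x(0,m) is the unique element of x of degree m *)
Definition shift (x : mset) (m : Q G) : mset :=
  fun mu => exists lam, x lam /\ deg L lam = m /\ sc L lam = rg L mu /\ x (comp lam mu).

Definition mset_eq (x y : mset) : Prop := forall lam, x lam <-> y lam.

Definition in_groupoid (x : mset) (q : Q G) (y : mset) : Prop :=
  exists m n, inP G m /\ inP G n /\ q = qmul G m (qinv G n) /\
    in_dom x m /\ in_dom y n /\ mset_eq (shift x m) (shift y n).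

End PG.

(* Main.v *)
Require Import Defs.
From Stdlib Require Import List Classical.

Section Aux.
Context {G : WQLO} (L : PGraph G).

Lemma qcancel (a b c : Q G) : qmul G a b = qmul G a c -> b = c.
Proof.
  intro H. rewrite <- (qmul_e_l G b), <- (qmul_e_l G c), <- (qmul_inv_l G a).
  rewrite <- !qmul_assoc, H. reflexivity.
Qed.

Lemma pre_refl (m : Mor L) : preceq L m m.
Proof. exists (pid L (sc L m)). rewrite rg_id, comp_id_r. auto. Qed.

Lemma pre_trans (a b c : Mor L) : preceq L a b -> preceq L b c -> preceq L a c.
Proof.
  intros [u [Hu ->]] [v [Hv ->]].
  rewrite sc_comp in Hv by exact Hu.
  exists (comp L u v). split.
  - rewrite rg_comp; auto.
  - rewrite comp_assoc; auto.
Qed.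

Lemma pre_rg (a b : Mor L) : preceq L a b -> rg L b = rg L a.
Proof. intros [u [Hu ->]]. apply rg_comp; auto. Qed.

Lemma pre_vertex (l : Mor L) : preceq L (pid L (rg L l)) l.
Proof. exists l. rewrite sc_id, comp_id_l. auto. Qed.

Lemma filter_vertex x v l : is_filter L x -> x (pid L v) -> x l -> rg L l = v.
Proof.
  intros [_ [_ Hd]] Hv Hl. destruct (Hd _ _ Hv Hl) as [n [_ [H1 H2]]].
  apply pre_rg in H1. apply pre_rg in H2. rewrite rg_id in H1. congruence.
Qed.

Lemma fact_uniq (l1 a1 l2 a2 : Mor L) :
  sc L l1 = rg L a1 -> sc L l2 = rg L a2 -> comp L l1 a1 = comp L l2 a2 ->
  deg L l1 = deg L l2 -> l1 = l2 /\ a1 = a2.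
Proof.
  intros H1 H2 He Hd.
  assert (Ha : deg L a1 = deg L a2).
  { apply (qcancel (deg L l1)). rewrite <- deg_comp by auto. rewrite He, deg_comp by auto.
    rewrite Hd. reflexivity. }
  destruct (unique_fact L (comp L l1 a1) (deg L l1) (deg L a1) (deg_P L _) (deg_P L _)
     (deg_comp L _ _ H1)) as [mu [nu [_ U]]].
  destruct (U l1 a1 H1 eq_refl eq_refl eq_refl) as [-> ->].
  destruct (U l2 a2 H2 He (eq_sym Hd) (eq_sym Ha)) as [-> ->]. auto.
Qed.

Lemma lcancel (m a b : Mor L) : sc L m = rg L a -> sc L m = rg L b ->
  comp L m a = comp L m b -> a = b.
Proof. intros. eapply fact_uniq; eauto. Qed.

Lemma deg_inj x l1 l2 : is_filter L x -> x l1 -> x l2 -> deg L l1 = deg L l2 -> l1 = l2.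
Proof.
  intros [_ [_ Hd]] H1 H2 He. destruct (Hd _ _ H1 H2) as [n [_ [[a1 [Ha1 E1]] [a2 [Ha2 E2]]]]].
  apply (fact_uniq l1 a1 l2 a2 Ha1 Ha2); [congruence | exact He].
Qed.


Definition zx (x : mset L) (mu : Mor L) : mset L :=
  fun g => sc L mu = rg L g /\ x (comp L mu g).

Lemma zx_filter x mu : is_filter L x -> x mu -> is_filter L (zx x mu).
Proof.
  intros Hf Hmu. pose proof Hf as [_ [Hh Hd]]. split; [|split].
  - exists (pid L (sc L mu)). split. rewrite rg_id; auto. rewrite comp_id_r; auto.
  - intros g h [Hg Hx] Hp. pose proof (pre_rg _ _ Hp) as Er.
    destruct Hp as [a [Ha ->]]. split. congruence.
    apply (Hh _ _ Hx). exists a. split.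
    + rewrite sc_comp; auto. congruence.
    + rewrite comp_assoc; auto. congruence.
  - intros g1 g2 [Hg1 Hx1] [Hg2 Hx2].
    destruct (Hd _ _ Hx1 Hx2) as [n [Hn [[a1 [Ha1 E1]] [a2 [Ha2 E2]]]]].
    rewrite sc_comp in Ha1 by auto. rewrite sc_comp in Ha2 by auto.
    rewrite <- comp_assoc in E1, E2 by auto.
    assert (Hr1 : sc L mu = rg L (comp L g1 a1)) by (rewrite rg_comp; auto).
    assert (Hr2 : sc L mu = rg L (comp L g2 a2)) by (rewrite rg_comp; auto).
    pose proof (lcancel _ _ _ Hr1 Hr2 (eq_trans (eq_sym E1) E2)) as Ee.
    exists (comp L g1 a1). split; [split; [auto | congruence]|].
    split. exists a1; auto. exists a2; auto.
Qed.

Lemma zx_act x mu : is_filter L x -> x mu -> mset_eq L x (act L mu (zx x mu)).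
Proof.
  intros Hf Hmu. pose proof Hf as [_ [Hh Hd]]. intro l. split.
  - intro Hl. destruct (Hd _ _ Hl Hmu) as [n [Hn [H1 [g [Hg ->]]]]].
    exists g. split; [split; auto | split; auto].
  - intros [g [[_ Hg] [_ Hp]]]. eauto.
Qed.

Lemma zx_shift x mu : is_filter L x -> x mu -> mset_eq L (shift L x (deg L mu)) (zx x mu).
Proof.
  intros Hf Hmu l. split.
  - intros [lam [Hl [Hd [Hs Hx]]]]. rewrite (deg_inj _ _ _ Hf Hl Hmu Hd) in *. split; auto.
  - intros [Hs Hx]. exists mu. auto.
Qed.

Lemma act_compat mu z z' : mset_eq L z z' -> mset_eq L (act L mu z) (act L mu z').
Proof. intros E l. split; intros [g [Hg R]]; exists g; split; auto; apply E; auto. Qed.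

Lemma shift_compat x x' m : mset_eq L x x' -> mset_eq L (shift L x m) (shift L x' m).
Proof.
  intros E l. split; intros [lam [H1 [H2 [H3 H4]]]]; exists lam; repeat split; auto; apply E; auto.
Qed.

Lemma FA_up l n : FA L l -> preceq L l n -> FA L n.
Proof. intros H Hp a b Ha. apply H. eapply pre_trans; eauto. Qed.

Lemma list_lift (mu : Mor L) (J : list (Mor L)) :
  (forall k, In k J -> exists k', sc L mu = rg L k' /\ k = comp L mu k') ->
  exists J', (forall k', In k' J' -> sc L mu = rg L k' /\ In (comp L mu k') J) /\
    (forall k, In k J -> exists k', In k' J' /\ sc L mu = rg L k' /\ k = comp L mu k').
Proof.
  induction J as [|k J IH]; intro H.
  - exists nil. split; intros ? [].
  - destruct IH as [J' [A B]]. { intros; apply H; right; auto. }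
    destruct (H k (or_introl eq_refl)) as [k' [Hk ->]].
    exists (k' :: J'). split.
    + intros k'' [<-|Hi]. split; auto. left; auto.
      destruct (A _ Hi). split; auto. right; auto.
    + intros k0 [<-|Hi]. exists k'. split; auto. left; auto.
      destruct (B _ Hi) as [k1 [? ?]]. exists k1. split; auto. right; auto.
Qed.

Lemma FA_suffix mu e : sc L mu = rg L e -> FA L (comp L mu e) -> FA L e.
Proof.
  intros He HF a b Ha.
  assert (Hra : rg L a = sc L mu) by (rewrite (pre_rg _ _ Ha); auto).
  destruct (classic (rg L b = sc L mu)) as [Hb|Hb].
  2:{ exists nil. intro k. split.
      - intros [Ka Kb]. apply pre_rg in Ka. apply pre_rg in Kb. congruence.
      - intros [? [[] _]]. }
  assert (Hma : in_ext L (comp L mu e) (comp L mu a)).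
  { destruct Ha as [c [Hc ->]]. exists c. split.
    - rewrite sc_comp; auto.
    - rewrite comp_assoc; auto. }
  destruct (HF _ (comp L mu b) Hma) as [J HJ].
  assert (Key : forall k, sc L mu = rg L k ->
            (in_ext L a k /\ in_ext L b k) <->
            (in_ext L (comp L mu a) (comp L mu k) /\ in_ext L (comp L mu b) (comp L mu k))).
  { intros k Hk. split.
    - intros [[c [Hc Ec]] [d [Hd Ed]]]. split.
      + exists c. rewrite sc_comp by congruence. split; auto. rewrite Ec, comp_assoc; auto; congruence.
      + exists d. rewrite sc_comp by congruence. split; auto. rewrite Ed, comp_assoc. all: auto.
    - intros [[c [Hc Ec]] [d [Hd Ed]]].
      rewrite sc_comp in Hc, Hd by congruence.
      rewrite <- comp_assoc in Ec, Ed by congruence. split.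
      + exists c. split; auto. apply (lcancel mu); auto. rewrite rg_comp; congruence.
      + exists d. split; auto. apply (lcancel mu); auto. rewrite rg_comp; congruence. }
  destruct (list_lift mu J) as [J' [A B]].
  { intros k Hk. assert (Hkk : in_ext L k k) by apply pre_refl.
    destruct (proj2 (HJ k) (ex_intro _ k (conj Hk Hkk))) as [[c [Hc ->]] _].
    rewrite sc_comp in Hc by congruence.
    exists (comp L a c). split. rewrite rg_comp; congruence.
    rewrite comp_assoc; auto; congruence. }
  exists J'. intro k. split.
  - intro Hk. assert (Hrk : sc L mu = rg L k).
    { destruct Hk as [Hk _]. rewrite (pre_rg _ _ Hk). congruence. }
    destruct (proj1 (HJ (comp L mu k)) (proj1 (Key k Hrk) Hk)) as [kk [Hi [c [Hc Ec]]]].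
    destruct (B _ Hi) as [k' [Hi' [Hk' ->]]].
    exists k'. split; auto. rewrite sc_comp in Hc by auto. exists c. split; auto.
    rewrite <- comp_assoc in Ec by auto. apply (lcancel mu); auto.
    rewrite rg_comp; congruence.
  - intros [k' [Hi [c [Hc ->]]]]. destruct (A _ Hi) as [Hk' Hi2].
    assert (Hrk : sc L mu = rg L (comp L k' c)) by (rewrite rg_comp; auto).
    apply (proj2 (Key _ Hrk)). apply HJ. exists (comp L mu k'). split; auto.
    exists c. rewrite sc_comp by auto. split; auto. rewrite comp_assoc; auto.
Qed.

Lemma zx_FA x mu : path_space L x -> x mu -> exists l, zx x mu l /\ FA L l.
Proof.
  intros [Hf [l [Hl HF]]] Hmu. pose proof Hf as [_ [_ Hd]].
  destruct (Hd _ _ Hl Hmu) as [n [Hn [H1 [e [He ->]]]]].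
  exists e. split. split; auto. apply (FA_suffix mu); auto. eapply FA_up; eauto.
Qed.


Lemma act_mu_in z mu : z (pid L (sc L mu)) -> act L mu z mu.
Proof.
  intro Hz. exists (pid L (sc L mu)). split; auto. split. rewrite rg_id; auto.
  rewrite comp_id_r. apply pre_refl.
Qed.

Lemma act_shift z mu : is_filter L z -> z (pid L (sc L mu)) ->
  mset_eq L (shift L (act L mu z) (deg L mu)) z.
Proof.
  intros Hf Hz l. pose proof Hf as [_ [Hh _]]. split.
  - intros [lam [[g [Hg [Hsg [a [Ha Ea]]]]] [Hd [Hs [g' [Hg' [Hsg' [b [Hb Eb]]]]]]]]].
    destruct (fact_uniq mu g lam a Hsg Ha Ea (eq_sym Hd)) as [<- _].
    rewrite sc_comp in Hb by auto. rewrite <- comp_assoc in Eb by auto.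
    assert (Hr : sc L mu = rg L (comp L l b)) by (rewrite rg_comp; auto).
    pose proof (lcancel _ _ _ Hsg' Hr Eb) as ->.
    apply (Hh _ _ Hg'). exists b. auto.
  - intro Hl. exists mu. split. apply act_mu_in; auto.
    assert (Hr : sc L mu = rg L l) by (symmetry; eapply filter_vertex; eauto).
    split; auto. split; auto. exists l. split; auto. split; auto. apply pre_refl.
Qed.

End Aux.

Theorem proposition5p21 (G : WQLO) (L : PGraph G)
  (hFA : exists lam, FA L lam)
  (x : mset L) (q : Q G) (y : mset L)
  (hx : path_space L x) (hy : path_space L y) :
  in_groupoid L x q y <->
  exists (z : mset L) (mu nu : Mor L),
    path_space L z /\
    z (pid L (sc L mu)) /\ sc L mu = sc L nu /\
    mset_eq L x (act L mu z) /\
    q = qmul G (deg L mu) (qinv G (deg L nu)) /\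
    mset_eq L y (act L nu z).
Proof.
  split.
  - intros [m [n [Pm [Pn [Hq [[mu [Xmu Dm]] [[nu [Ynu Dn]] Hsh]]]]]]]. subst m n.
    pose proof (proj1 hx) as Fx. pose proof (proj1 hy) as Fy.
    assert (Ez : mset_eq L (zx L x mu) (zx L y nu)).
    { intro l. rewrite <- (zx_shift L x mu Fx Xmu l), <- (zx_shift L y nu Fy Ynu l). apply Hsh. }
    assert (Hp : zx L x mu (pid L (sc L mu))).
    { split. rewrite rg_id; auto. rewrite comp_id_r; auto. }
    exists (zx L x mu), mu, nu. split; [|split; [|split; [|split; [|split]]]].
    + split. apply zx_filter; auto. apply zx_FA; auto.
    + auto.
    + apply Ez in Hp. destruct Hp as [Hp _]. rewrite rg_id in Hp. auto.
    + apply zx_act; auto.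
    + auto.
    + intro l. rewrite (zx_act L y nu Fy Ynu l). apply act_compat.
      intro k. symmetry. apply Ez.
  - intros [z [mu [nu [[Fz Az] [Hz [Hs [Ex [Hq Ey]]]]]]]].
    assert (Hz' : z (pid L (sc L nu))) by (rewrite <- Hs; auto).
    exists (deg L mu), (deg L nu). split; [apply deg_P|]. split; [apply deg_P|].
    split; auto. split; [|split].
    + exists mu. split; auto. apply Ex. apply act_mu_in; auto.
    + exists nu. split; auto. apply Ey. apply act_mu_in; auto.
    + intro l. rewrite (shift_compat L _ _ _ Ex l), (shift_compat L _ _ _ Ey l).
      rewrite (act_shift L z mu Fz Hz l), (act_shift L z nu Fz Hz' l). tauto.
Qed.
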